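(* In a combinatorial auction where all bidders other than $i$ play piecewise constant strategies, every cell $S$ of bidder $i$'s action space has a unique Pareto point, and this Pareto point is a vertex of $S$.
   Context: A combinatorial auction sells goods $M$ to bidders $N$; each bidder $i$ bids a vector $b_i\in\mathbb{R}_{\ge0}^r$ on his $r$ bundles of interest (other bundles bid $0$). An allocation gives each bidder one bundle of interest or $\emptyset$, pairwise disjoint; $X(b)$ is the set of allocations maximizing reported welfare $\sum_i b_i(x_i)$. Bidders' valuations are independent random variables $V_j$ and strategies $s_j$ map valuations to bids; piecewise constant means finitely many values, so $b_{-i}=s_{-i}(V_{-i})$ has finite support. A cell of bidder $i$'s action space $\mathbb{R}_{\ge0}^r$ is a maximal (with respect to inclusion) connected region $S$ such that for every $b_{-i}$ with positive probability there exists an allocation $x$ with $x\in X(b_i,b_{-i})$ for all $b_i\in S$; cells are convex polytopes. A Pareto point of a cell $S$ is a point $b_i\in S$ such that there is no $b_i'\in S$ with $b_i'\le b_i$ coordinatewise and $b_i'\neq b_i$. *)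

(* Defs.v *)
From HB Require Import structures.
From mathcomp Require Import all_boot all_order all_algebra.
From mathcomp Require Import all_classical all_reals all_analysis.
Import numFieldTopology.Exports numFieldNormedType.Exports.
Set Implicit Arguments. Unset Strict Implicit. Unset Printing Implicit Defensive.
Import Order.TTheory GRing.Theory Num.Theory.
Local Open Scope ring_scope.
Local Open Scope classical_set_scope.

Section Auction.
Variables (R : realType) (N M : finType) (r : nat).
(* bundles j k : the k-th bundle of interest of bidder j *)
Variable bundles : N -> 'I_r -> {set M}.

(* An allocation gives each bidder the index of one of his bundles of
   interest (Some k) or the empty bundle (None). *)
Definition allocation := {ffun N -> option 'I_r}.

Definition feasible (x : allocation) : Prop :=
  forall j l : N, j != l -> forall a c : 'I_r,
    x j = Some a -> x l = Some c -> (bundles j a :&: bundles l c == finset.set0).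

(* reported value of bidder j's bid vector on his allocated bundle;
   the empty bundle (and any bundle not of interest) is bid 0 *)
Definition bid_value (bj : 'rV[R]_r) (o : option 'I_r) : R :=
  if o is Some k then bj ord0 k else 0.

Definition welfare (b : N -> 'rV[R]_r) (x : allocation) : R :=
  \sum_(j : N) bid_value (b j) (x j).

Definition optimal (b : N -> 'rV[R]_r) (x : allocation) : Prop :=
  feasible x /\ forall y : allocation, feasible y -> welfare b y <= welfare b x.

Definition profile (i : N) (bi : 'rV[R]_r) (bm : N -> 'rV[R]_r) : N -> 'rV[R]_r :=
  fun j => if j == i then bi else bm j.

Definition nonneg_orthant : set 'rV[R]_r := [set b | forall k, 0 <= b ord0 k].

(* supp j : the finite set of bids of bidder j (j <> i) played with positive
   probability; by independence, b_{-i} has positive probability iff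
   b_{-i} j \in supp j for all j <> i. *)
Definition pos_prob (i : N) (supp : N -> seq 'rV[R]_r) (bm : N -> 'rV[R]_r) : Prop :=
  forall j, j != i -> bm j \in supp j.

Definition admissible (i : N) (supp : N -> seq 'rV[R]_r) (S : set 'rV[R]_r) : Prop :=
  forall bm, pos_prob i supp bm ->
    exists x : allocation, forall bi, S bi -> optimal (profile i bi bm) x.

Definition region_ok i supp (S : set 'rV[R]_r) : Prop :=
  S `<=` nonneg_orthant /\ connected S /\ admissible i supp S.

Definition cell (i : N) (supp : N -> seq 'rV[R]_r) (S : set 'rV[R]_r) : Prop :=
  region_ok i supp S /\
  forall T, region_ok i supp T -> S `<=` T -> T = S.

Definition coord_le (q p : 'rV[R]_r) : Prop := forall k, q ord0 k <= p ord0 k.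

Definition pareto_point (S : set 'rV[R]_r) (p : 'rV[R]_r) : Prop :=
  S p /\ ~ (exists q, S q /\ coord_le q p /\ q <> p).

(* vertex = extreme point of the (convex) set S *)
Definition vertex (S : set 'rV[R]_r) (p : 'rV[R]_r) : Prop :=
  S p /\ forall a c : 'rV[R]_r, S a -> S c -> forall t : R, 0 < t < 1 ->
    p = t *: a + (1 - t) *: c -> a = c.

End Auction.

(* Main.v *)
Require Import Defs.
From HB Require Import structures.
From mathcomp Require Import all_boot all_order all_algebra.
From mathcomp Require Import all_classical all_reals all_analysis.
From mathcomp Require Import lra.
Import numFieldTopology.Exports numFieldNormedType.Exports.
Import Order.TTheory GRing.Theory Num.Theory.
Local Open Scope ring_scope.
Local Open Scope classical_set_scope.

Lemma star_connected (R : realType) (r : nat) (C : set 'rV[R]_r) (p : 'rV[R]_r) :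
  C p -> (forall b, C b -> forall t : R, 0 <= t <= 1 -> C (p + t *: (b - p))) ->
  connected C.
Proof.
move=> Cp Cst.
have -> : C = \bigcup_(b in C) ((fun t : R => p + t *: (b - p)) @` `[0, 1]%classic).
  apply/seteqP; split => [b Cb|b [c Cc [t t01 <-]]].
    exists b => //; exists 1; first by rewrite /= in_itv /= lexx ler01.
    by rewrite scale1r addrC subrK.
  by apply: Cst => //; move: t01; rewrite /= in_itv.
apply: bigcup_connected.
  exists p => b Cb; exists 0; first by rewrite /= in_itv /= lexx ler01.
  by rewrite scale0r addr0.
move=> b Cb; apply: connected_continuous_connected; first exact: segment_connected.
apply: continuous_subspaceT => t.
apply: (@continuousD _ _ _ (fun=> p) (fun t : R => t *: (b - p))); first exact: cst_continuous.
apply: continuousZr_tmp => //.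
Qed.

Section Helpers.
Unset Strict Implicit.
Set Implicit Arguments.
Variables (R : realType) (N M : finType) (r : nat).
Variable bundles : N -> 'I_r -> {set M}.

Lemma welfare_profile (i : N) (b b' : 'rV[R]_r) bm (z : allocation N r) :
  welfare (profile i b bm) z - bid_value b (z i) =
  welfare (profile i b' bm) z - bid_value b' (z i).
Proof.
rewrite /welfare (bigD1 i) //= [in RHS](bigD1 i) //= /profile eqxx.
rewrite (addrC (bid_value b _)) (addrC (bid_value b' _)) !addrK.
by apply: eq_bigr => j /negbTE ->.
Qed.

Lemma bv_mono (p b : 'rV[R]_r) o :
  coord_le p b -> bid_value p o <= bid_value b o.
Proof. by case: o => [k|] //= /(_ k). Qed.

Lemma exists_opt (b : N -> 'rV[R]_r) : exists x, optimal bundles b x.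
Proof.
pose x0 : allocation N r := [ffun=> None].
have f0 : `[< feasible bundles x0 >].
  by apply/asboolP => j l _ a c; rewrite ffunE.
case: (@arg_maxP _ _ _ x0 (fun x => `[< feasible bundles x >]) (welfare b) f0).
move=> x /asboolP fx Hx; exists x; split => // y fy.
exact: Hx (asboolT fy).
Qed.

Lemma welfare_conv (i : N) (p b : 'rV[R]_r) bm (z : allocation N r) (t : R) :
  welfare (profile i (p + t *: (b - p)) bm) z =
  welfare (profile i p bm) z + t * (welfare (profile i b bm) z - welfare (profile i p bm) z).
Proof.
have E c : welfare (profile i c bm) z =
   (welfare (profile i 0 bm) z - bid_value 0 (z i)) + bid_value c (z i).
  by rewrite -(welfare_profile i c 0) subrK.
rewrite !(E (p + _)) !(E p) (E b).
case: (z i) => [k|] /=; last by rewrite !addr0 subrr mulr0 addr0.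
rewrite !mxE; lra.
Qed.

End Helpers.

Theorem lemma3 (R : realType) (N M : finType) (r : nat)
  (bundles : N -> 'I_r -> {set M}) (i : N) (supp : N -> seq 'rV[R]_r) :
  (forall j, j != i -> supp j != [::]) ->
  (forall j, j != i -> forall b, b \in supp j -> nonneg_orthant b) ->
  forall S : set 'rV[R]_r, cell bundles i supp S ->
    exists p, [/\ pareto_point S p,
                  (forall q, pareto_point S q -> q = p) &
                  vertex S p].
Proof.
move=> _ _ S [[Sor [Scon Sadm]] Smax].
have [b0 Sb0] : exists b, S b.
  apply: contrapT => nS.
  have T0ok : region_ok bundles i supp [set (0 : 'rV[R]_r)].
    split; first by move=> b -> k; rewrite mxE.
    split; first exact: connected1.
    move=> bm _; have [x Hx] := exists_opt bundles (profile i 0 bm).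
    by exists x => bi ->.
  have := Smax _ T0ok (fun b Sb => ltac:(exfalso; apply: nS; exists b; exact: Sb)).
  by move=> E; apply: nS; exists 0; rewrite -E.
pose E k := [set b ord0 k | b in S].
pose p : 'rV[R]_r := \row_k inf (E k).
have pk k : p ord0 k = inf (E k) by rewrite mxE.
have lbE k : lbound (E k) 0 by move=> _ [b Sb <-]; exact: Sor.
have hinf k : has_inf (E k).
  by split; [exists (b0 ord0 k); exists b0 | exists 0; exact: lbE].
have ple b : S b -> coord_le p b.
  by move=> Sb k; rewrite pk; apply: (ge_inf (hinf k).2); exists b.
have pge0 k : 0 <= p ord0 k.
  by rewrite pk; apply: lb_le_inf; [exists (b0 ord0 k); exists b0 | exact: lbE].
have adh k eps : 0 < eps -> exists2 b, S b & b ord0 k < p ord0 k + eps.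
  move=> e0; have [_ [b Sb <-] lt] := inf_adherent e0 (hinf k).
  by exists b => //; rewrite pk.
pose T : set 'rV[R]_r := [set b | nonneg_orthant b /\
   forall bm, pos_prob i supp bm -> forall x : allocation N r,
     (forall bi, S bi -> optimal bundles (profile i bi bm) x) ->
     optimal bundles (profile i b bm) x].
have ST : S `<=` T by move=> b Sb; split; [exact: Sor | move=> bm _ x Hx; exact: Hx].
have Tp : T p.
  split => // bm _ x Hx; split; first exact: (Hx b0 Sb0).1.
  move=> y fy.
  have key b : S b -> welfare (profile i p bm) y <=
      welfare (profile i p bm) x + (bid_value b (x i) - bid_value p (x i)).
    move=> Sb; have Wb := (Hx b Sb).2 y fy.
    have ey := welfare_profile i p b bm y.
    have ex := welfare_profile i p b bm x.
    have my := bv_mono (y i) (ple b Sb).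
    lra.
  case hx: (x i) => [k|].
    apply/ler_addgt0Pr => eps e0; have [b Sb lt] := adh k eps e0.
    have := key b Sb; rewrite hx /= => H; lra.
  by have := key b0 Sb0; rewrite hx /= subrr addr0.
have Tstar b : T b -> forall t : R, 0 <= t <= 1 -> T (p + t *: (b - p)).
  move=> [Tb0 Tb] t /andP[t0 t1]; split.
    move=> k; have := pge0 k; have := Tb0 k; rewrite !mxE; nra.
  move=> bm pb x Hx; have [fx Hpx] := Tp.2 bm pb x Hx; have [_ Hbx] := Tb bm pb x Hx.
  split => // y fy; rewrite !welfare_conv.
  have := Hpx y fy; have := Hbx y fy; nra.
have Tok : region_ok bundles i supp T.
  split; first by move=> b [].
  split; first exact: star_connected Tp Tstar.
  move=> bm pb; have [x Hx] := Sadm bm pb; exists x => bi [_ Tbi].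
  exact: Tbi bm pb x Hx.
have Sp : S p by rewrite -(Smax T Tok ST).
have eqp q : S q -> coord_le q p -> q = p.
  move=> Sq le; apply/rowP => k; apply/eqP; rewrite eq_le le /=.
  exact: ple.
exists p; split.
- split => // -[q [Sq [le neq]]]; exact: neq (eqp q Sq le).
- move=> q [Sq nq]; have [//|neq] := eqVneq q p.
  by exfalso; apply: nq; exists p; split => //; split; [exact: ple | apply/eqP; rewrite eq_sym].
- split => // a c Sa Sc t /andP[t0 t1] ep.
  have ea : a = p.
    apply/rowP => k; have := congr1 (fun m : 'rV[R]_r => m ord0 k) ep; 
    have := ple a Sa k; have := ple c Sc k; rewrite !mxE; move=> h1 h2 h3; apply/eqP; rewrite eq_le h2 /=; nra.
  have ec : c = p.
    apply/rowP => k; have := congr1 (fun m : 'rV[R]_r => m ord0 k) ep; 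
    have := ple a Sa k; have := ple c Sc k; rewrite !mxE; move=> h1 h2 h3; apply/eqP; rewrite eq_le h1 /=; nra.
  by rewrite ea ec.
Qed.
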